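(* Let $p\ge1$ be an integer, $x_1,\dots,x_p\in\mathbb{R}_{\ge0}$, $\epsilon\in(0,1]$, and $\delta>0$ with $\delta\le\frac{\min_{i\in[p]}x_i}{4\epsilon^{-1}\log(2p\epsilon^{-1})}$. Let $x'_1,\dots,x'_p\in\mathbb{R}_{\ge0}$ satisfy $x_i\le x'_i\le x_i+\delta$ for all $i\in[p]$. Then $\mathrm{TV}\big(\mathrm{softargmin}^\epsilon_{i\in[p]}x_i,\ \mathrm{softargmin}^\epsilon_{i\in[p]}x'_i\big)\le\frac{10\epsilon^{-1}\log(2p\epsilon^{-1})\delta}{\min_{i\in[p]}x_i}$.
   Context: Softmin: if $\min_i x_i=0$, $\mathrm{softargmin}^\epsilon_{i\in[p]}x_i$ is an arbitrary index $i$ with $x_i=0$. Otherwise, sample $\bm c$ uniformly from $\big[\frac{2\epsilon^{-1}\log(2p\epsilon^{-1})}{\min_i x_i},\frac{4\epsilon^{-1}\log(2p\epsilon^{-1})}{\min_i x_i}\big]$, then sample $\bm i^*\in[p]$ with $\Pr[\bm i^*=i\mid\bm c]=\exp(-\bm c x_i)/\sum_{i'\in[p]}\exp(-\bm c x_{i'})$, and set $\mathrm{softargmin}^\epsilon_{i\in[p]}x_i=\bm i^*$ (the same procedure on $x'_1,\dots,x'_p$ defines $\mathrm{softargmin}^\epsilon_{i\in[p]}x'_i$). $\log$ is natural. $\mathrm{TV}(\bm X,\bm X')=\inf_{\mathcal D}\Pr_{(X,X')\sim\mathcal D}[X\neq X']$ over couplings $\mathcal D$. *)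

(* Defs.v *)
From HB Require Import structures.
From mathcomp Require Import all_boot all_order all_algebra.
From mathcomp Require Import all_classical all_reals all_analysis.
Set Implicit Arguments. Unset Strict Implicit. Unset Printing Implicit Defensive.
Import Order.TTheory GRing.Theory Num.Theory.
Local Open Scope classical_set_scope.
Local Open Scope ring_scope.

Section SoftMin.
Variable R : realType.

(* min_{i in [p]} x_i  (meaningful for p >= 1) *)
Definition minx (p : nat) (x : 'I_p -> R) : R := inf [set x i | i in [set: 'I_p]].

Definition Lconst (p : nat) (eps : R) : R := eps^-1 * ln (2 * p%:R * eps^-1).

(* The law (probability mass function on [p]) of softargmin^eps_{i in [p]} x_i:
   if min x = 0, a (fixed) index i with x_i = 0;
   otherwise c ~ Unif[2L/min x, 4L/min x] and Pr[i* = i | c] = exp(-c x_i)/sum exp(-c x_j),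
   so Pr[i* = i] = (1/(b-a)) * int_a^b exp(-c x_i)/sum_j exp(-c x_j) dc. *)
Definition softargmin_law (p : nat) (eps : R) (x : 'I_p -> R) (i : 'I_p) : R :=
  let m := minx x in
  if m == 0 then
    (if [pick j | x j == 0] is Some j then (i == j)%:R else 0)
  else
    let a := 2 * Lconst p eps / m in
    let b := 4 * Lconst p eps / m in
    (b - a)^-1 *
      Rintegral lebesgue_measure `[a, b]
        (fun c => expR (- (c * x i)) / \sum_(j < p) expR (- (c * x j))).

Definition is_coupling (p : nat) (P Q : 'I_p -> R) (D : 'I_p -> 'I_p -> R) : Prop :=
  (forall i j, 0 <= D i j) /\
  (forall i, \sum_(j < p) D i j = P i) /\
  (forall j, \sum_(i < p) D i j = Q j).

(* TV(X, X') = inf over couplings of Pr[X <> X'] *)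
Definition TV (p : nat) (P Q : 'I_p -> R) : R :=
  inf [set \sum_(i < p) \sum_(j < p | j != i) D i j | D in is_coupling P Q].

End SoftMin.

(* Main.v *)
Require Import Defs.
From HB Require Import structures.
From mathcomp Require Import all_boot all_order all_algebra.
From mathcomp Require Import all_classical all_reals all_analysis.
From mathcomp Require Import ring lra.
Import Order.TTheory GRing.Theory Num.Theory.
Import numFieldNormedType.Exports.
Local Open Scope ring_scope.

Section An.
Variable R : realType.
Variable p : nat.
Hypothesis hp : (0 < p)%N.

Definition Zf (y : 'I_p -> R) (c : R) := \sum_(j < p) expR (- (c * y j)).
Definition ff (y : 'I_p -> R) (i : 'I_p) (c : R) := expR (- (c * y i)) / Zf y c.

Lemma Zf_gt0 y c : 0 < Zf y c.
Proof.
rewrite /Zf (bigD1 (Ordinal hp)) //=.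
by apply: ltr_wpDr; [apply: sumr_ge0 => j _; exact: expR_ge0|exact: expR_gt0].
Qed.

Lemma ff_ge0 y i c : 0 <= ff y i c.
Proof. by rewrite /ff divr_ge0 ?expR_ge0 // ltW // Zf_gt0. Qed.

Lemma ff_sum y c : \sum_(i < p) ff y i c = 1.
Proof. by rewrite /ff -big_distrl /= -/(Zf y c) divff // gt_eqF // Zf_gt0. Qed.

Lemma cont_lin (y : R) : continuous (fun c : R => expR (- (c * y))).
Proof.
move=> c; apply: continuous_comp; last exact: continuous_expR.
apply: continuousN; apply: continuousM; [exact: cvg_id|exact: cvg_cst].
Qed.

Lemma Zf_cont y : continuous (Zf y).
Proof.
move=> c; rewrite /Zf.
suff H : forall s : seq 'I_p,
    {for c, continuous (fun c0 : R => \sum_(j <- s) expR (- (c0 * y j)))} by exact: H.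
elim=> [|j s IH].
  under [X in {for c, continuous X}]funext do rewrite big_nil.
  exact: cvg_cst.
under [X in {for c, continuous X}]funext do rewrite big_cons.
exact: (continuousD (cont_lin (y j) c) IH).
Qed.

Lemma ff_cont y i : continuous (ff y i).
Proof.
move=> c.
have hZ : Zf y c != 0 by rewrite gt_eqF // Zf_gt0.
exact: (continuousM (cont_lin (y i) c) (continuousV hZ (Zf_cont y c))).
Qed.

Local Open Scope classical_set_scope.

Lemma int_itv (g : R -> R) (u v : R) : continuous g ->
  lebesgue_measure.-integrable `[u, v] (EFin \o g).
Proof.
move=> hg; apply: continuous_compact_integrable; first exact: segment_compact.
exact: continuous_subspaceT.
Qed.

Lemma cont_sum (I : Type) (s : seq I) (F : I -> R -> R) :
  (forall k, continuous (F k)) -> continuous (fun c => \sum_(k <- s) F k c).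
Proof.
move=> hF c.
suff H : {for c, continuous (fun c0 : R => \sum_(k <- s) F k c0)} by exact: H.
elim: s => [|j s IH].
  under [X in {for c, continuous X}]funext do rewrite big_nil.
  exact: cvg_cst.
under [X in {for c, continuous X}]funext do rewrite big_cons.
exact: (continuousD (hF j c) IH).
Qed.

Lemma Rint_sum (I : Type) (s : seq I) (F : I -> R -> R) (u v : R) :
  (forall k, continuous (F k)) ->
  Rintegral lebesgue_measure `[u, v] (fun c => \sum_(k <- s) F k c) =
  \sum_(k <- s) Rintegral lebesgue_measure `[u, v] (F k).
Proof.
move=> hF; elim: s => [|j s IH].
  rewrite big_nil; under eq_Rintegral do rewrite big_nil.
  by rewrite Rintegral_cst ?mul0r //; exact: measurable_itv.
rewrite big_cons -IH; under eq_Rintegral do rewrite big_cons.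
rewrite RintegralD //.
  exact: int_itv.
by apply: int_itv; exact: cont_sum.
Qed.

Lemma Rint_one (u v : R) : u <= v ->
  Rintegral lebesgue_measure `[u, v] (fun=> 1) = v - u.
Proof.
move=> uv; rewrite Rintegral_cst //. transitivity (1 * fine (@lebesgue_measure R `[u, v])); first by []. rewrite (@lebesgue_measure_itv R `[u, v]%R) /= lte_fin.

case: ltP => h; first by rewrite mul1r.
have -> : v = u by apply/eqP; rewrite eq_le uv h.
by rewrite subrr mul1r.
Qed.

Lemma Rint_splitL (g : R -> R) (u w v : R) : continuous g ->
  (forall c, 0 <= g c) -> u <= w -> w <= v ->
  Rintegral lebesgue_measure `[u, w] g <= Rintegral lebesgue_measure `[u, v] g.
Proof.
move=> hg g0 uw wv.
rewrite (@itv_bndbnd_setU _ _ (BLeft u) (BRight w) (BRight v)); last 2 first.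
+ by rewrite bnd_simp.
+ by rewrite bnd_simp.
rewrite Rintegral_setU //; first last.
+ apply/disj_setPS => c [] /=; rewrite !in_itv /= => /andP[_ h1] /andP[h2 _].
  by move: (lt_le_trans h2 h1); rewrite ltxx.
+ rewrite -(@itv_bndbnd_setU _ _ (BLeft u) (BRight w) (BRight v)); last 2 first.
  * by rewrite bnd_simp.
  * by rewrite bnd_simp.
  exact: int_itv.
by rewrite lerDl; apply: Rintegral_ge0 => c _.
Qed.

Lemma Rint_splitR (g : R -> R) (u w v : R) : continuous g ->
  (forall c, 0 <= g c) -> u <= w -> w <= v ->
  Rintegral lebesgue_measure `[w, v] g <= Rintegral lebesgue_measure `[u, v] g.
Proof.
move=> hg g0 uw wv.
rewrite (@itv_bndbnd_setU _ _ (BLeft u) (BLeft w) (BRight v)); last 2 first.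
+ by rewrite bnd_simp.
+ by rewrite bnd_simp.
rewrite Rintegral_setU //; first last.
+ apply/disj_setPS => c [] /=; rewrite !in_itv /= => /andP[_ h1] /andP[h2 _].
  by move: (lt_le_trans h1 h2); rewrite ltxx.
+ rewrite -(@itv_bndbnd_setU _ _ (BLeft u) (BLeft w) (BRight v)); last 2 first.
  * by rewrite bnd_simp.
  * by rewrite bnd_simp.
  exact: int_itv.
by rewrite lerDr; apply: Rintegral_ge0 => c _.
Qed.

Lemma minx_lb (y : 'I_p -> R) : (forall i, 0 <= y i) -> forall i, minx y <= y i.
Proof.
move=> y0 i; apply: ge_inf; last by exists i.
by exists 0 => _ [j _ <-].
Qed.

Lemma minx_glb (y : 'I_p -> R) (c : R) : (forall i, c <= y i) -> c <= minx y.
Proof.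
move=> hc; apply: lb_le_inf; first by exists (y (Ordinal hp)), (Ordinal hp).
by move=> _ [j _ <-].
Qed.

Lemma ff_sumint (y : 'I_p -> R) (u v : R) : u <= v ->
  \sum_(i < p) Rintegral lebesgue_measure `[u, v] (ff y i) = v - u.
Proof.
move=> uv; rewrite -Rint_sum; last by move=> k; exact: ff_cont.
under eq_Rintegral do rewrite ff_sum.
exact: Rint_one.
Qed.

Lemma ff_cmp (x x' : 'I_p -> R) (delta b c : R) i :
  (forall j, x j <= x' j <= x j + delta) -> 0 <= c -> c <= b -> 0 <= delta ->
  0 <= 1 - b * delta ->
  (1 - b * delta) * ff x i c <= ff x' i c.
Proof.
move=> hx c0 cb d0 bd0.
have hZ : Zf x' c <= Zf x c.
  apply: ler_sum => j _; rewrite ler_expR lerN2; apply: ler_wpM2l => //.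
  by case/andP: (hx j).
have hE : (1 - b * delta) * expR (- (c * x i)) <= expR (- (c * x' i)).
  apply: (@le_trans _ _ (expR (- (c * delta)) * expR (- (c * x i)))).
    apply: ler_wpM2r; first exact: expR_ge0.
    apply: le_trans (expR_ge1Dx _).
    by rewrite lerD2l lerN2 ler_wpM2r.
  rewrite -expRD ler_expR -opprD -mulrDr lerN2 ler_wpM2l // addrC.
  by case/andP: (hx i).
rewrite /ff mulrA.
apply: (@le_trans _ _ (expR (- (c * x' i)) / Zf x c)).
  by apply: ler_wpM2r => //; rewrite invr_ge0 ltW // Zf_gt0.
apply: ler_wpM2l; first exact: expR_ge0.
by rewrite lef_pV2 // posrE Zf_gt0.
Qed.

End An.
Arguments minx_lb {R p y}.
Arguments minx_glb {R p} hp {y c}.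
Arguments ff_cmp {R p} hp {x x' delta b c} i.
Arguments ff_sumint {R p} hp y {u v}.
Arguments Rint_splitL {R g u w v}.
Arguments Rint_splitR {R g u w v}.
Arguments ff_cont {R p} hp y i.
Arguments ff_ge0 {R p} hp y i c.
Arguments int_itv {R g} u v.
Arguments ff {R p} y i c.
Arguments Zf {R p} y c.
Lemma TV_le (R : realType) (p : nat) (P Q mu : 'I_p -> R) :
  \sum_(i < p) P i = 1 -> \sum_(i < p) Q i = 1 ->
  (forall i, 0 <= mu i <= P i) -> (forall i, mu i <= Q i) ->
  \sum_(i < p) mu i < 1 ->
  TV P Q <= 1 - \sum_(i < p) mu i.
Proof.
move=> sP sQ hP hQ slt.
set r := 1 - \sum_(i < p) mu i.
have r0 : 0 < r by rewrite subr_gt0.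
pose E i j := (P i - mu i) * (Q j - mu j) / r.
have E0 i j : 0 <= E i j.
  rewrite /E; apply: divr_ge0; last exact: ltW.
  apply: mulr_ge0; rewrite subr_ge0; last exact: hQ.
  by case/andP: (hP i).
have sE i : \sum_(j < p) E i j = P i - mu i.
  rewrite /E -big_distrl /= -big_distrr /= sumrB sQ -/r.
  by rewrite -mulrA divff ?mulr1 // gt_eqF.
pose D i j := (i == j)%:R * mu i + E i j.
have DC : is_coupling P Q D.
  split; [|split].
  - move=> i j; rewrite /D; apply: addr_ge0 => //.
    apply: mulr_ge0; [by case: (i == j)|by case/andP: (hP i)].
  - move=> i; rewrite /D big_split /= sE (bigD1 i) //= eqxx mul1r big1.
      by rewrite addr0 addrC subrK.
    by move=> j /negbTE; rewrite eq_sym => ->; rewrite mul0r.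
  - move=> j; rewrite /D big_split /= (bigD1 j) //= eqxx mul1r big1; last first.
      by move=> i /negbTE ->; rewrite mul0r.
    rewrite addr0 /E -!big_distrl /= sumrB sP -/r.
    by rewrite mulrAC divff ?mul1r ?gt_eqF // addrC subrK.
have key : \sum_(i < p) \sum_(j < p | j != i) D i j <= r.
  have -> : r = \sum_(i < p) (P i - mu i) by rewrite sumrB sP.
  apply: ler_sum => i _.
  rewrite -sE [X in _ <= X](bigD1 i) //=.
  have -> : \sum_(j < p | j != i) D i j = \sum_(j < p | j != i) E i j.
    by apply: eq_bigr => j; rewrite /D eq_sym => /negbTE ->; rewrite mul0r add0r.
  by rewrite lerDr.
apply: le_trans key.
apply: ge_inf; last by exists D.
exists 0 => _ [D' [D'0 _] <-].
by apply: sumr_ge0 => i _; apply: sumr_ge0 => j _; exact: D'0.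
Qed.

Local Close Scope classical_set_scope.
Theorem mainTheorem11 (R : realType) (p : nat) (x x' : 'I_p -> R) (eps delta : R) :
  (1 <= p)%N ->
  (forall i, 0 <= x i) -> (forall i, 0 <= x' i) ->
  0 < eps -> eps <= 1 ->
  0 < delta -> delta <= minx x / (4 * Lconst p eps) ->
  (forall i, x i <= x' i <= x i + delta) ->
  TV (softargmin_law eps x) (softargmin_law eps x')
    <= 10 * Lconst p eps * delta / minx x.
Proof.
move=> hp x0 x'0 e0 e1 d0 dle hx.
set L := Lconst p eps.
have p1 : 1 <= (p%:R : R) by rewrite ler1n.
have ei : 1 <= eps^-1 by rewrite invf_ge1.
have X2 : 2 <= 2 * p%:R * eps^-1 :> R by nra.
have lnX : 1/2 <= ln (2 * p%:R * eps^-1 : R).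
  have h2 : 1/2 <= ln (2 : R).
    have := expR_ge1Dx (- ln (2 : R)).
    rewrite expRN lnK ?posrE //; lra.
  apply: le_trans h2 _; rewrite ler_ln ?posrE //; lra.
have L2 : 1/2 <= L.
  rewrite /L /Lconst; nra.
have L0 : 0 < L by lra.
set m := minx x; set m' := minx x'.
have dm : delta * (4 * L) <= m by rewrite -ler_pdivlMr //; lra.
have m0 : 0 < m by nra.
have mm' : m <= m'.
  apply: (minx_glb hp) => i; apply: le_trans (minx_lb x0 i) _.
  by case/andP: (hx i).
have m'd : m' <= m + delta.
  suff : m' - delta <= m by lra.
  apply: (minx_glb hp) => i; have := minx_lb x'0 i; case/andP: (hx i) => _ h.
  rewrite -/m'; lra.
have m'0 : 0 < m' by lra.
have lawE : forall y : 'I_p -> R, minx y != 0 -> forall i, softargmin_law eps y i =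
   (4 * L / minx y - 2 * L / minx y)^-1 *
   Rintegral lebesgue_measure `[2 * L / minx y, 4 * L / minx y] (ff y i).
  by move=> y my i; rewrite /softargmin_law /= (negbTE my).
pose a := 2 * L / m; pose a' := 2 * L / m'.
have hb : 4 * L / m = 2 * a by rewrite /a; ring.
have hb' : 4 * L / m' = 2 * a' by rewrite /a'; ring.
have a0 : 0 < a by rewrite /a divr_gt0 // mulr_gt0.
have a'0 : 0 < a' by rewrite /a' divr_gt0 // mulr_gt0.
have a'a : a' <= a.
  rewrite /a /a' ler_wpM2l //; first lra.
  by rewrite lef_pV2 ?posrE.
have aa' : a <= 2 * a'.
  rewrite -hb' /a ler_pdivrMr // mulrAC ler_pdivlMr //; nra.
have ad : 2 * a * delta <= 1.
  rewrite (_ : 2 * a * delta = (delta * (4 * L)) / m); last by rewrite /a; field; rewrite gt_eqF.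
  by rewrite ler_pdivrMr // mul1r.
pose u := delta / m.
have ua : u <= a * delta.
  have u0 : 0 <= u by rewrite /u divr_ge0 // ltW.
  have -> : a * delta = (2 * L) * u by rewrite /a /u; ring.
  nra.
have F3 : a - a' <= a * u.
  have -> : a' = a * (m / m') by rewrite /a /a'; field; apply/andP; split; rewrite gt_eqF.
  rewrite -{1}[a]mulr1 -mulrBr; apply: ler_wpM2l; first exact: ltW.
  have -> : 1 - m / m' = (m' - m) / m' by field; rewrite gt_eqF.
  apply: (@le_trans _ _ (delta / m')).
    by rewrite ler_wpM2r ?invr_ge0; lra.
  by rewrite ler_wpM2l ?lef_pV2 ?posrE //; lra.
have mne : m != 0 by rewrite gt_eqF.
have m'ne : m' != 0 by rewrite gt_eqF.
have LP i : softargmin_law eps x i = a^-1 * Rintegral lebesgue_measure `[a, 2 * a] (ff x i).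
  by rewrite lawE // -/m hb -/a (_ : 2 * a - a = a) //; ring.
have LQ i : softargmin_law eps x' i = a'^-1 * Rintegral lebesgue_measure `[a', 2 * a'] (ff x' i).
  by rewrite lawE // -/m' hb' -/a' (_ : 2 * a' - a' = a') //; ring.
pose I1 i := Rintegral lebesgue_measure `[a, 2 * a'] (ff x i).
pose mu i := a^-1 * ((1 - 2 * a * delta) * I1 i).
have smu : \sum_(i < p) mu i = a^-1 * ((1 - 2 * a * delta) * (2 * a' - a)).
  by rewrite -big_distrr /= -big_distrr /= (ff_sumint hp x aa').
have I10 i : 0 <= I1 i by apply: Rintegral_ge0 => c _; exact: ff_ge0.
apply: (le_trans (@TV_le R p _ _ mu _ _ _ _ _)).
- under eq_bigr do rewrite LP.
  rewrite -big_distrr /= (ff_sumint hp x); last lra.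
  rewrite (_ : 2 * a - a = a) ?mulVf ?gt_eqF //; ring.
- under eq_bigr do rewrite LQ.
  rewrite -big_distrr /= (ff_sumint hp x'); last lra.
  rewrite (_ : 2 * a' - a' = a') ?mulVf ?gt_eqF //; ring.
- move=> i; apply/andP; split.
    rewrite /mu; apply: mulr_ge0; first by rewrite invr_ge0 ltW.
    apply: mulr_ge0 => //; lra.
  rewrite LP /mu; apply: ler_wpM2l; first by rewrite invr_ge0 ltW.
  apply: (@le_trans _ _ (I1 i)).
    rewrite -[X in _ <= X]mul1r; apply: ler_wpM2r; [exact: I10|nra].
  apply: Rint_splitL; [exact: ff_cont|exact: ff_ge0|lra|lra].
- move=> i; rewrite LQ /mu.
  set I2 := Rintegral _ _ _.
  have I20 : 0 <= I2 by apply: Rintegral_ge0 => c _; exact: ff_ge0.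
  have h1 : (1 - 2 * a * delta) * I1 i <= I2.
    rewrite /I1 -RintegralZl //; last by apply: int_itv; exact: ff_cont.
    apply: (@le_trans _ _ (Rintegral lebesgue_measure `[a, 2 * a'] (ff x' i))).
      apply: le_Rintegral => //.
      + have hc : continuous (fun c : R => (1 - 2 * a * delta) * ff x i c).
          by move=> c; exact: (continuousM (@cst_continuous _ _ (1 - 2 * a * delta) c) (ff_cont hp x i c)).
        exact: (int_itv _ _ hc).
      + by apply: int_itv; exact: ff_cont.
      move=> c; rewrite /= in_itv /= => /andP[ca cb].
      apply: (ff_cmp hp i hx); nra.
    apply: Rint_splitR; [exact: ff_cont|exact: ff_ge0|lra|lra].
  apply: (@le_trans _ _ (a^-1 * I2)).
    by apply: ler_wpM2l => //; rewrite invr_ge0 ltW.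
  apply: ler_wpM2r => //.
  by rewrite lef_pV2 ?posrE.
- rewrite smu mulrC ltr_pdivrMr // mul1r.
  have h := mulr_gt0 a0 d0.
  have h2 : 0 <= (a - a') * (1 - 2 * a * delta) by apply: mulr_ge0; nra.
  nra.
rewrite smu (_ : 10 * L * delta / m = 5 * a * delta); last by rewrite /a; ring.
set X := (1 - 2 * a * delta) * (2 * a' - a).
rewrite (_ : 1 - a^-1 * X = (a - X) / a); last by field; rewrite gt_eqF.
rewrite ler_pdivrMr //.
have h3 : a * u <= a * (a * delta) by apply: ler_wpM2l => //; exact: ltW.
have h4 : 2 * a * delta * (2 * a' - a) <= 2 * a * delta * a.
  apply: ler_wpM2l; [nra|lra].
rewrite /X; nra.
Qed.
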